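(* Let $R$ be a ring (associative with identity), let $m,n\geq 1$ and $k\geq 2$ be integers. If the matrix rings $M_n(R)$ and $M_m(R)$ are both $k$-clean, then so is $M_{n+m}(R)$.
   Context: For a positive integer $k$, a ring $S$ is $k$-clean if every element of $S$ can be written as $e+u_1+\cdots+u_k$ with $e=e^2\in S$ and $u_1,\dots,u_k$ units of $S$. *)

(* Defs.v *)
From mathcomp Require Import all_boot all_algebra.
Set Implicit Arguments. Unset Strict Implicit. Unset Printing Implicit Defensive.
Import GRing.Theory.
Local Open Scope ring_scope.

(* u is a unit of the (possibly noncommutative) ring S: it has a two-sided
   inverse.  (MathComp only equips square matrices over a *commutative* unit
   ring with a unitRingType structure, so we use the plain definition.) *)
Definition is_unit (S : nzRingType) (u : S) : Prop :=
  exists v : S, u * v = 1 /\ v * u = 1.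

Definition k_clean (S : nzRingType) (k : nat) : Prop :=
  forall x : S, exists (e : S) (u : 'I_k -> S),
    e * e = e /\ (forall i, is_unit (u i)) /\ x = e + \sum_(i < k) u i.

(* Main.v *)
Require Import Defs.
From mathcomp Require Import all_boot all_algebra.
Set Implicit Arguments. Unset Strict Implicit. Unset Printing Implicit Defensive.
Import GRing.Theory.
Local Open Scope ring_scope.

Definition minv (R : nzRingType) (N : nat) (A : 'M[R]_N) :=
  exists B : 'M[R]_N, A *m B = 1%:M /\ B *m A = 1%:M.

Lemma minvM (R : nzRingType) N (A B : 'M[R]_N) : minv A -> minv B -> minv (A *m B).
Proof.
move=> [A' [h1 h2]] [B' [h3 h4]]; exists (B' *m A'); split.
  by rewrite mulmxA -(mulmxA A) h3 mulmx1 h1.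
by rewrite mulmxA -(mulmxA B') h2 mulmx1 h4.
Qed.

Lemma sum_block (R : nzRingType) p1 p2 q1 q2 k
  (F1 : 'I_k -> 'M[R]_(p1, q1)) (F2 : 'I_k -> 'M[R]_(p1, q2))
  (F3 : 'I_k -> 'M[R]_(p2, q1)) (F4 : 'I_k -> 'M[R]_(p2, q2)) :
  \sum_(i < k) block_mx (F1 i) (F2 i) (F3 i) (F4 i) =
  block_mx (\sum_i F1 i) (\sum_i F2 i) (\sum_i F3 i) (\sum_i F4 i).
Proof.
elim: k F1 F2 F3 F4 => [|k IH] F1 F2 F3 F4.
  by rewrite !big_ord0 block_mx0.
by rewrite !big_ord_recr /= IH add_block_mx.
Qed.

Lemma core (R : nzRingType) p q k
  (Ha : forall x : 'M[R]_p, exists e (u : 'I_k.+1 -> 'M[R]_p),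
          e *m e = e /\ (forall i, minv (u i)) /\ x = e + \sum_(i < k.+1) u i)
  (Hb : forall x : 'M[R]_q, exists e (u : 'I_k.+1 -> 'M[R]_q),
          e *m e = e /\ (forall i, minv (u i)) /\ x = e + \sum_(i < k.+1) u i)
  (x : 'M[R]_(p + q)) :
  exists e (u : 'I_k.+1 -> 'M[R]_(p + q)),
          e *m e = e /\ (forall i, minv (u i)) /\ x = e + \sum_(i < k.+1) u i.
Proof.
rewrite -[x]submxK.
set a := ulsubmx x; set b := ursubmx x; set c := dlsubmx x; set d := drsubmx x.
have [f [u [hf [hu ha]]]] := Ha a.
have [u0' [h1 h2]] := hu ord0.
have [g [w [hg [hw hd]]]] := Hb (d - c *m u0' *m b).
exists (block_mx f 0 0 g), (fun i => block_mx (u i) (if i == ord0 then b else 0)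
   (if i == ord0 then c else 0) (w i + if i == ord0 then c *m u0' *m b else 0)).
split.
  by rewrite mulmx_block !mulmx0 !mul0mx !addr0 !add0r hf hg.
split.
  move=> i; case: eqP => [->|_] /=.
    idtac.
    have -> : block_mx (u ord0) b c (w ord0 + c *m u0' *m b) =
       block_mx 1%:M 0 (c *m u0') 1%:M *m block_mx (u ord0) 0 0 (w ord0)
         *m block_mx 1%:M (u0' *m b) 0 1%:M.
      rewrite !mulmx_block !mulmx0 !mul0mx !mulmx1 !mul1mx !addr0 !add0r.
      by rewrite (mulmxA (u ord0)) h1 mul1mx -(mulmxA c u0' (u ord0)) h2 mulmx1 mulmxA addrC.
    apply: minvM; first apply: minvM.
    - exists (block_mx 1%:M 0 (- (c *m u0')) 1%:M).
      rewrite !mulmx_block !mulmx0 !mul0mx !mulmx1 !mul1mx !addr0 !add0r.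
      by rewrite addrN addNr -scalar_mx_block.
    - have [w0' [h3 h4]] := hw ord0.
      exists (block_mx u0' 0 0 w0').
      rewrite !mulmx_block !mulmx0 !mul0mx !addr0 !add0r.
      by rewrite h1 h2 h3 h4 -scalar_mx_block.
    - exists (block_mx 1%:M (- (u0' *m b)) 0 1%:M).
      rewrite !mulmx_block !mulmx0 !mul0mx !mulmx1 !mul1mx !addr0 !add0r.
      by rewrite addrN addNr -scalar_mx_block.
  rewrite addr0; have [ui' [h3 h4]] := hu i; have [wi' [h5 h6]] := hw i.
  exists (block_mx ui' 0 0 wi').
  rewrite !mulmx_block !mulmx0 !mul0mx !addr0 !add0r.
  by rewrite h3 h4 h5 h6 -scalar_mx_block.
rewrite sum_block add_block_mx big_split /=.
rewrite -!big_mkcond !big_pred1_eq !add0r.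
by rewrite -ha addrA -hd subrK.
Qed.

Lemma core2 (R : nzRingType) p q k N (eN : p + q = N)
  (Ha : forall x : 'M[R]_p, exists e (u : 'I_k.+1 -> 'M[R]_p),
          e *m e = e /\ (forall i, minv (u i)) /\ x = e + \sum_(i < k.+1) u i)
  (Hb : forall x : 'M[R]_q, exists e (u : 'I_k.+1 -> 'M[R]_q),
          e *m e = e /\ (forall i, minv (u i)) /\ x = e + \sum_(i < k.+1) u i)
  (x : 'M[R]_N) :
  exists e (u : 'I_k.+1 -> 'M[R]_N),
          e *m e = e /\ (forall i, minv (u i)) /\ x = e + \sum_(i < k.+1) u i.
Proof. by case: N / eN x; apply: core. Qed.

(* matrix sizes n.+1, m.+1 encode n, m >= 1; (n + m).+2 = n.+1 + m.+1 *)
Theorem lemma5 (R : nzRingType) (n m k : nat) (hk : (2 <= k)%N) :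
  k_clean [the nzRingType of 'M[R]_n.+1] k ->
  k_clean [the nzRingType of 'M[R]_m.+1] k ->
  k_clean [the nzRingType of 'M[R]_((n + m).+2)] k.
Proof.
case: k hk => [//|k] _ Ha Hb x.
have eN : (n.+1 + m.+1 = (n + m).+2)%N by rewrite addnS addSn.
have [e [u [h1 [h2 h3]]]] := core2 eN (R := R) (k := k)
  (fun y => let: ex_intro e (ex_intro u (conj h1 (conj h2 h3))) := Ha y in
     ex_intro _ e (ex_intro _ u (conj h1 (conj h2 h3))))
  (fun y => let: ex_intro e (ex_intro u (conj h1 (conj h2 h3))) := Hb y in
     ex_intro _ e (ex_intro _ u (conj h1 (conj h2 h3)))) x.
by exists e, u.
Qed.
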